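(* Fix $\varepsilon>0$, let $k_n=e^{n^{2+\varepsilon}}$ and $C=6/\pi^2$, and let $X$ be the random variable with $\mathbb{P}(X=k_n)=\mathbb{P}(X=-k_n)=C/(2k_n^2n^2)$ for $n=1,2,\dots$ and $\mathbb{P}(X=0)=1-\sum_n C/(k_n^2n^2)$. Then $\mathbb{E}X=0$, $\operatorname{Var}(X)=1$, $\mathbb{E}\big[X^2(\log^+|X|)^{1/2}\big]=\infty$, and \[ \limsup_{n\to\infty}\frac{Q_n}{\sqrt{\log n}}=\infty,\qquad\text{where } Q_n=\sum_{k=1}^n\frac1k\Big(\sigma^2-\mathbb{E}\big[|X-\mu|^2\mathbf{1}_{\{|X-\mu|\le\sigma k\}}\big]\Big) \] with $\mu=0,\sigma=1$. In particular, for $f$ with $f''(\mu)\neq0$, $b_n-\tilde b_n\neq o(\sqrt{\log n})$, where $b_n=nf(\mu)+\frac{f''(\mu)}{2}\sum_{k=1}^n\frac1k\mathbb{E}[|X-\mu|^2\mathbf{1}_{\{|X-\mu|\le\sigma k\}}]$ and $\tilde b_n=nf(\mu)+\frac{f''(\mu)\sigma^2}{2}\log n$.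
   Context: $\log^+x=\log(x\vee1)$. *)

(* Defs.v *)
From Stdlib Require Import Reals Lra ClassicalEpsilon.
Open Scope R_scope.

Definition logplus (x : R) : R := ln (Rmax x 1).

Definition Cst : R := 6 / PI ^ 2.

Definition kk (eps : R) (n : nat) : R := exp (Rpower (INR n) (2 + eps)).

Definition patom (eps : R) (n : nat) : R := Cst / (2 * kk eps n ^ 2 * INR n ^ 2).

(* The distribution of X: atoms +-k_n (n >= 1) with mass patom eps n each,
   and atom 0 with mass p0.  Partial sums of E[g(X)]: the term of index m
   collects the atoms +-k_(m+1). *)
Definition expect_partial (eps p0 : R) (g : R -> R) (m : nat) : R :=
  p0 * g 0 + sum_f_R0 (fun i => patom eps (S i) * (g (kk eps (S i)) + g (- kk eps (S i)))) m.

Definition Integrable (eps p0 : R) (g : R -> R) : Prop :=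
  exists l, Un_cv (expect_partial eps p0 (fun x => Rabs (g x))) l.

(* limit of a real sequence (classical choice; meaningful when it converges) *)
Definition Lim (u : nat -> R) : R := epsilon (inhabits 0) (fun l => Un_cv u l).

(* E[g(X)] (meaningful when g(X) is integrable) *)
Definition Expect (eps p0 : R) (g : R -> R) : R := Lim (expect_partial eps p0 g).

(* E[g(X)] = +infinity, for nonnegative g *)
Definition ExpectInfinite (eps p0 : R) (g : R -> R) : Prop :=
  cv_infty (expect_partial eps p0 g).

Definition indic (b : Prop) : R := if excluded_middle_informative b then 1 else 0.

Definition mu0 : R := 0.
Definition sigma1 : R := 1.

Definition truncM2 (eps p0 : R) (k : nat) : R :=
  Expect eps p0 (fun x => Rabs (x - mu0) ^ 2 * indic (Rabs (x - mu0) <= sigma1 * INR k)).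

Definition Qn (eps p0 : R) (n : nat) : R :=
  sum_f_R0 (fun i => / INR (S i) * (sigma1 ^ 2 - truncM2 eps p0 (S i))) (pred n).
(* for n >= 1 this is sum_{k=1}^n; Qn 0 = Qn 1 is irrelevant for limits *)

Definition bn (eps p0 f0 f2 : R) (n : nat) : R :=
  INR n * f0 + f2 / 2 * sum_f_R0 (fun i => / INR (S i) * truncM2 eps p0 (S i)) (pred n).

Definition btn (f0 f2 : R) (n : nat) : R :=
  INR n * f0 + f2 * sigma1 ^ 2 / 2 * ln (INR n).

(* Main.v *)
Require Import Defs.
From Stdlib Require Import Reals Lra Lia ClassicalEpsilon ZArith.
Open Scope R_scope.


Fixpoint sm (g : nat -> R) (n : nat) : R :=
  match n with O => 0 | S n' => sm g n' + g n' end.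

Lemma sm_S g n : sm g (S n) = sm g n + g n.
Proof. reflexivity. Qed.

Lemma sm_ext g h n : (forall j, (j < n)%nat -> g j = h j) -> sm g n = sm h n.
Proof. induction n; intros H; [reflexivity|]. rewrite !sm_S, IHn by (intros; apply H; lia).
rewrite H by lia. reflexivity. Qed.

Lemma sm_plus g h n : sm (fun j => g j + h j) n = sm g n + sm h n.
Proof. induction n; [simpl; ring|]. rewrite !sm_S, IHn; ring. Qed.

Lemma sm_scal c g n : sm (fun j => c * g j) n = c * sm g n.
Proof. induction n; [simpl; ring|]. rewrite !sm_S, IHn; ring. Qed.

Lemma sm_add g a b : sm g (a + b) = sm g a + sm (fun j => g (a + j)%nat) b.
Proof. induction b. rewrite Nat.add_0_r; simpl; ring.
rewrite Nat.add_succ_r, !sm_S, IHb; ring. Qed.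

Lemma sm_first g n : sm g (S n) = g 0%nat + sm (fun j => g (S j)) n.
Proof. induction n. simpl; ring. rewrite sm_S, IHn, sm_S. ring. Qed.

Lemma sm_rev g n : sm g n = sm (fun j => g (n - 1 - j)%nat) n.
Proof. induction n. reflexivity.
rewrite sm_S, IHn, sm_first. replace (S n - 1 - 0)%nat with n by lia.
rewrite Rplus_comm. f_equal. apply sm_ext. intros j Hj. f_equal. lia. Qed.

Lemma sm_le g h n : (forall j, (j < n)%nat -> g j <= h j) -> sm g n <= sm h n.
Proof. induction n; intros H; [simpl; lra|]. rewrite !sm_S.
assert (sm g n <= sm h n) by (apply IHn; intros; apply H; lia).
assert (g n <= h n) by (apply H; lia). lra. Qed.

Lemma sm_pair g m : sm g (2*m) = sm (fun j => g (2*j)%nat + g (2*j+1)%nat) m.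
Proof. induction m. reflexivity.
replace (2 * S m)%nat with (S (S (2*m))) by lia. rewrite !sm_S, IHm.
replace (S (2*m)) with (2*m+1)%nat by lia. ring. Qed.

Lemma sm_sum g n : sum_f_R0 g n = sm g (S n).
Proof. induction n. simpl; ring. simpl sum_f_R0. rewrite IHn. reflexivity. Qed.

Definition fs (x : R) : R := / (sin x) ^ 2.

Lemma fs_dbl y : sin y <> 0 -> cos y <> 0 ->
  fs (2 * y) = / 4 * (fs y + / (cos y) ^ 2).
Proof. intros Hs Hc. unfold fs. rewrite sin_2a.
assert (E := sin2_cos2 y). unfold Rsqr in E.
field_simplify; [|auto|auto]. field_simplify. 2: auto. 2:auto.
rewrite <- E at 1. field; auto. Qed.


Definition th (N j : nat) : R := (2 * INR j + 1) * PI / 2 ^ (S N).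

Lemma pow2_INR N : INR (2 ^ N)%nat = 2 ^ N.
Proof. rewrite pow_INR. reflexivity. Qed.

Lemma th_S N j : th N j = 2 * th (S N) j.
Proof. unfold th. simpl pow. field. apply pow_nonzero. lra. Qed.

Lemma th_range N j : (j < 2 ^ N)%nat -> 0 < th (S N) j < PI / 2.
Proof. intros H. unfold th.
assert (P := PI_RGT_0). assert (Q := pow_lt 2 N ltac:(lra)).
assert (INR (S j) <= INR (2^N)) by (apply le_INR; lia).
rewrite S_INR, pow2_INR in H0. assert (0 <= INR j) by apply pos_INR.
simpl pow. split.
- apply Rdiv_lt_0_compat; [|lra]. nra.
- apply Rmult_lt_reg_r with (2 * (2 * 2 ^ N)); [lra|].
  field_simplify; [|lra]. nra. Qed.

Lemma th_shift N j : th (S N) (2 ^ N + j)%nat = th (S N) j + PI / 2.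
Proof. unfold th. rewrite plus_INR, pow2_INR. simpl pow. field. apply pow_nonzero; lra. Qed.

Lemma th_rev N j : (j < 2 ^ N)%nat -> th (S N) (2 ^ N - 1 - j)%nat = PI / 2 - th (S N) j.
Proof. intros H. replace (2 ^ N - 1 - j)%nat with (2^N - S j)%nat by lia.
unfold th. rewrite minus_INR by lia. rewrite S_INR, pow2_INR. simpl pow. field. apply pow_nonzero; lra. Qed.

Lemma A_val N : sm (fun j => fs (th N j)) (2 ^ N) = 2 ^ N * 2 ^ N.
Proof. induction N.
- simpl. unfold fs, th. simpl. replace ((2 * 0 + 1) * PI / (2 * 1)) with (PI/2) by field.
  rewrite sin_PI2. field.
- rewrite Nat.pow_succ_r by lia. replace (2 * 2 ^ N)%nat with (2^N + 2^N)%nat by lia.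
  rewrite sm_add.
  transitivity (sm (fun j => 4 * fs (th N j)) (2^N)).
  + rewrite <- sm_plus. apply sm_ext. intros j Hj.
    rewrite th_shift. destruct (th_range N j Hj) as [H1 H2].
    assert (0 < sin (th (S N) j)) by (apply sin_gt_0; lra).
    assert (0 < cos (th (S N) j)) by (apply cos_gt_0; lra).
    rewrite (th_S N j), fs_dbl by (apply Rgt_not_eq; lra). unfold fs at 2. rewrite sin_plus, sin_PI2, cos_PI2.
    replace (sin (th (S N) j) * 0 + cos (th (S N) j) * 1) with (cos (th (S N) j)) by ring.
    field. apply Rgt_not_eq; lra.
  + rewrite sm_scal, IHN. simpl. ring. Qed.

Lemma B_val N : sm (fun j => fs (th (S N) j)) (2 ^ N) = 2 * (2 ^ N * 2 ^ N).
Proof. assert (E := A_val (S N)).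
rewrite Nat.pow_succ_r in E by lia. replace (2 * 2 ^ N)%nat with (2^N + 2^N)%nat in E by lia.
rewrite sm_add in E.
assert (sm (fun j => fs (th (S N) (2 ^ N + j))) (2 ^ N) = sm (fun j => fs (th (S N) j)) (2 ^ N)).
{ rewrite sm_rev. apply sm_ext. intros j Hj. rewrite th_shift.
  replace (th (S N) (2 ^ N - 1 - j) + PI / 2) with (PI - th (S N) j).
  - unfold fs. rewrite sin_PI_x. reflexivity.
  - rewrite th_rev by lia. lra. }
rewrite H in E. simpl pow in E. lra. Qed.


Lemma tan_ge_x y : 0 < y < PI / 2 -> y <= tan y.
Proof. intros [H1 H2].
destruct (MVT_cor2 tan (fun c => 1 + tan c ^ 2) 0 y H1) as [c [Hc1 Hc2]].
- intros c Hc. assert (Hr : - PI / 2 < c < PI / 2) by lra.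
  assert (E := derive_pt_tan c Hr). unfold derive_pt in E. rewrite <- E.
  apply (proj2_sig (derivable_pt_tan c Hr)).
- rewrite tan_0 in Hc1. assert (0 <= tan c ^ 2) by (apply pow2_ge_0). nra. Qed.

Lemma fs_bounds y : 0 < y < PI / 2 -> fs y - 1 <= / y ^ 2 <= fs y.
Proof. intros [H1 H2]. assert (P := PI_RGT_0).
assert (Hs : 0 < sin y) by (apply sin_gt_0; lra).
assert (Hc : 0 < cos y) by (apply cos_gt_0; lra).
assert (Hsl := sin_lt_x y H1). assert (Ht := tan_ge_x y (conj H1 H2)).
unfold fs. split.
- assert (E := sin2_cos2 y). unfold Rsqr in E.
  assert (fs y - 1 = / (tan y) ^ 2).
  { unfold fs, tan. replace (/ (sin y / cos y) ^ 2) with (cos y ^ 2 / sin y ^ 2) by (field; split; apply Rgt_not_eq; lra).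
    replace (cos y ^ 2) with (1 - sin y ^ 2) by (simpl; lra). field. apply Rgt_not_eq; lra. }
  unfold fs in H. rewrite H. apply Rinv_le_contravar. nra.
  assert (0 < tan y) by lra. nra.
- apply Rinv_le_contravar. nra. nra. Qed.

Definition Od (m : nat) : R := sm (fun j => / (2 * INR j + 1) ^ 2) m.
Definition Zd (m : nat) : R := sm (fun i => / (INR i + 1) ^ 2) m.

Lemma O_bounds N : PI ^ 2 / 8 - PI ^ 2 / (16 * 2 ^ N) <= Od (2 ^ N) <= PI ^ 2 / 8.
Proof. assert (P := PI_RGT_0). assert (Q := pow_lt 2 N ltac:(lra)).
set (m := 2 ^ N).
assert (Ey : forall j, / th (S N) j ^ 2 = (16 * m * m / PI ^ 2) * / (2 * INR j + 1) ^ 2).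
{ intros j. unfold th, m. simpl pow. assert (0 <= INR j) by apply pos_INR. field. split; lra. }
assert (HB := B_val N).
assert (S1 : sm (fun j => / th (S N) j ^ 2) (2 ^ N) = (16 * m * m / PI ^ 2) * Od (2^N)).
{ unfold Od. rewrite <- sm_scal. apply sm_ext. intros; apply Ey. }
assert (L1 : sm (fun j => / th (S N) j ^ 2) (2 ^ N) <= sm (fun j => fs (th (S N) j)) (2 ^ N)).
{ apply sm_le. intros j Hj. apply fs_bounds, th_range, Hj. }
assert (L2 : sm (fun j => fs (th (S N) j) - 1) (2 ^ N) <= sm (fun j => / th (S N) j ^ 2) (2 ^ N)).
{ apply sm_le. intros j Hj. apply fs_bounds, th_range, Hj. }
assert (E2 : sm (fun j => fs (th (S N) j) - 1) (2 ^ N) = sm (fun j => fs (th (S N) j)) (2 ^ N) - m).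
{ unfold Rminus. rewrite sm_plus. f_equal. unfold m. rewrite <- pow2_INR.
  generalize (2 ^ N)%nat. intros k. induction k. simpl; ring. rewrite sm_S, IHk, S_INR. ring. }
rewrite E2, HB, S1 in *. fold m in L1, L2.
assert (Qm : 0 < m) by exact Q. assert (0 < m * m) by (apply Rmult_lt_0_compat; lra). assert (0 < PI ^ 2) by (apply pow_lt; lra).
assert (0 < 16 * m * m / PI ^ 2) by (apply Rdiv_lt_0_compat; lra).
split.
- apply Rmult_le_reg_l with (16 * m * m / PI ^ 2); [lra|].
  replace (16 * m * m / PI ^ 2 * (PI ^ 2 / 8 - PI ^ 2 / (16 * m))) with (2 * (m * m) - m) by (field; repeat split; lra). lra.
- apply Rmult_le_reg_l with (16 * m * m / PI ^ 2); [lra|].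
  replace (16 * m * m / PI ^ 2 * (PI ^ 2 / 8)) with (2 * (m * m)) by (field; repeat split; lra). lra. Qed.

Lemma Z_pair m : Zd (2 * m) = Od m + / 4 * Zd m.
Proof. unfold Zd, Od. rewrite sm_pair, <- sm_scal, <- sm_plus. apply sm_ext. intros j _.
rewrite plus_INR, !mult_INR. simpl INR. assert (0 <= INR j) by apply pos_INR. field. lra. Qed.

Lemma Z_bound n : Zd (S n) <= 2 - / (INR n + 1).
Proof. induction n. unfold Zd. simpl. lra.
unfold Zd in *. rewrite sm_S. rewrite S_INR. assert (0 <= INR n) by apply pos_INR.
assert (/ (INR n + 1 + 1) ^ 2 <= / (INR n + 1) - / (INR n + 1 + 1)).
{ replace (/ (INR n + 1) - / (INR n + 1 + 1)) with (/ ((INR n + 1) * (INR n + 1 + 1))) by (field; lra).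
  apply Rinv_le_contravar. nra. nra. }
lra. Qed.

Lemma Z_grow : Un_growing Zd.
Proof. intros n. unfold Zd. rewrite sm_S. assert (0 <= INR n) by apply pos_INR.
assert (0 < / (INR n + 1) ^ 2) by (apply Rinv_0_lt_compat; nra). lra. Qed.

Lemma pow2_ge N : (S N <= 2 ^ N)%nat.
Proof. induction N. simpl; lia. rewrite Nat.pow_succ_r by lia. lia. Qed.

Lemma cv_sub u l (phi : nat -> nat) : Un_cv u l -> (forall n, (n <= phi n)%nat) -> Un_cv (fun n => u (phi n)) l.
Proof. intros H Hp e He. destruct (H e He) as [N HN]. exists N. intros n Hn. apply HN.
specialize (Hp n). lia. Qed.

Lemma basel_Z : Un_cv Zd (PI ^ 2 / 6).
Proof.
destruct (growing_cv Zd Z_grow) as [L HL].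
{ exists 2. intros x [n Hn]. subst x. destruct n. unfold Zd; simpl; lra.
  assert (H := Z_bound n). assert (0 <= INR n) by apply pos_INR.
  assert (0 < / (INR n + 1)) by (apply Rinv_0_lt_compat; lra). lra. }
assert (H1 : Un_cv (fun N => Zd (2 * 2 ^ N)%nat - / 4 * Zd (2 ^ N)%nat) (L - / 4 * L)).
{ apply CV_minus. apply cv_sub with (u := Zd); auto. intros n. assert (H := pow2_ge n). lia.
  apply CV_mult. intros e He. exists 0%nat. intros. unfold Rdist. rewrite Rminus_diag, Rabs_R0. lra.
  apply cv_sub with (u := Zd); auto. intros n. assert (H := pow2_ge n). lia. }
assert (H2 : Un_cv (fun N => Zd (2 * 2 ^ N)%nat - / 4 * Zd (2 ^ N)%nat) (PI ^ 2 / 8)).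
{ intros e He. assert (P := PI_RGT_0).
  destruct (archimed (PI ^ 2 / (16 * e))) as [Ha _].
  assert (0 < PI ^ 2 / (16 * e)) by (apply Rdiv_lt_0_compat; nra).
  assert (0 < IZR (up (PI ^ 2 / (16 * e)))) by lra.
  exists (Z.to_nat (up (PI ^ 2 / (16 * e)))). intros n Hn.
  rewrite Z_pair. replace (Od (2 ^ n) + / 4 * Zd (2 ^ n) - / 4 * Zd (2 ^ n)) with (Od (2^n)) by ring.
  destruct (O_bounds n) as [B1 B2]. unfold Rdist. rewrite Rabs_left1 by lra.
  assert (HI : IZR (up (PI ^ 2 / (16 * e))) <= INR n).
  { rewrite INR_IZR_INZ. apply IZR_le. apply lt_0_IZR in H0. lia. }
  assert (H3 : INR (S n) <= INR (2 ^ n)) by (apply le_INR, pow2_ge). rewrite S_INR, pow2_INR in H3.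
  assert (PI ^ 2 / (16 * 2 ^ n) < e).
  { apply Rmult_lt_reg_r with (16 * 2 ^ n / e). apply Rdiv_lt_0_compat; lra.
    replace (PI ^ 2 / (16 * 2 ^ n) * (16 * 2 ^ n / e)) with (PI ^ 2 / e) by (field; repeat split; lra).
    replace (e * (16 * 2 ^ n / e)) with (16 * 2 ^ n) by (field; lra).
    assert (EE : PI ^ 2 / (16 * e) = PI^2 / e / 16) by (field; lra). assert (T : PI^2 / e / 16 < 2 ^ n) by (rewrite <- EE; lra). lra. }
  lra. }
assert (L - / 4 * L = PI ^ 2 / 8) by (eapply UL_sequence; eauto).
replace (PI ^ 2 / 6) with L by lra. exact HL. Qed.


Lemma ln_le_x1 y : 0 < y -> ln y <= y - 1.
Proof. intros H. destruct (Rle_or_lt (ln y) (y - 1)) as [h|h]; auto.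
apply exp_increasing in h. rewrite exp_ln in h by lra. assert (T := exp_ineq1_le (y - 1)). lra. Qed.

Lemma ln_diff a b : 0 < a -> 0 < b -> ln a - ln b <= a / b - 1.
Proof. intros Ha Hb. replace a with (b * (a / b)) at 1 by (field; lra).
rewrite ln_mult by (try apply Rdiv_lt_0_compat; lra).
assert (T := ln_le_x1 (a / b) ltac:(apply Rdiv_lt_0_compat; lra)). lra. Qed.

Lemma ln_le a b : 0 < a -> a <= b -> ln a <= ln b.
Proof. intros Ha Hab. destruct (Req_dec a b). subst; lra. left; apply ln_increasing; lra. Qed.

Lemma H_lower m : ln (INR m + 2) <= sum_f_R0 (fun i => / INR (S i)) m.
Proof. induction m.
- simpl. replace (0 + 2) with 2 by ring. assert (T := exp_ineq1 1 ltac:(lra)).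
  assert (ln 2 < 1). { rewrite <- (ln_exp 1). apply ln_increasing; lra. } lra.
- cbn [sum_f_R0]. assert (0 <= INR m) by apply pos_INR.
  assert (T := ln_diff (INR m + 1 + 2) (INR m + 2) ltac:(lra) ltac:(lra)).
  assert (E1 : INR (S m) = INR m + 1) by apply S_INR.
  assert (E2 : / INR (S (S m)) = (INR m + 1 + 2) / (INR m + 2) - 1) by (rewrite !S_INR; field; lra).
  rewrite E1, E2. lra. Qed.

Lemma H_upper m : sum_f_R0 (fun i => / INR (S i)) m <= 1 + ln (INR m + 1).
Proof. induction m.
- simpl. replace (0 + 1) with 1 by ring. rewrite ln_1. lra.
- cbn [sum_f_R0]. assert (0 <= INR m) by apply pos_INR.
  assert (T := ln_diff (INR m + 1) (INR m + 1 + 1) ltac:(lra) ltac:(lra)).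
  assert (E1 : INR (S m) = INR m + 1) by apply S_INR.
  assert (E2 : / INR (S (S m)) = - ((INR m + 1) / (INR m + 1 + 1) - 1)) by (rewrite !S_INR; field; lra).
  rewrite E1, E2. lra. Qed.

Lemma Lim_eq u l : Un_cv u l -> Lim u = l.
Proof. intros H. unfold Lim. apply UL_sequence with u; auto.
apply (epsilon_spec (inhabits 0) (fun l => Un_cv u l)). exists l; auto. Qed.

Lemma cv_ext u v l : (forall n, v n = u n) -> Un_cv u l -> Un_cv v l.
Proof. intros E H e He. destruct (H e He) as [N HN]. exists N. intros n Hn. rewrite E. auto. Qed.

Lemma basel : Un_cv (fun n => sum_f_R0 (fun i => / INR (S i) ^ 2) n) (PI ^ 2 / 6).
Proof. apply cv_ext with (u := fun n => Zd (S n)).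
- intros n. rewrite sm_sum. unfold Zd. apply sm_ext. intros. rewrite S_INR. reflexivity.
- apply cv_sub with (u := Zd). apply basel_Z. intros; lia. Qed.

Lemma basel1 : Un_cv (fun n => sum_f_R0 (fun i => Cst / INR (S i) ^ 2) n) 1.
Proof. apply cv_ext with (u := fun n => Cst * sum_f_R0 (fun i => / INR (S i) ^ 2) n).
- intros n. rewrite scal_sum. apply sum_eq. intros. unfold Rdiv. ring.
- replace 1 with (Cst * (PI ^ 2 / 6)).
  apply CV_mult. intros e He. exists 0%nat. intros. unfold Rdist. rewrite Rminus_diag, Rabs_R0. lra.
  apply basel.
  unfold Cst. assert (P := PI_RGT_0). field. lra. Qed.

Lemma Cst_pos : 0 < Cst.
Proof. unfold Cst. assert (P := PI_RGT_0). apply Rdiv_lt_0_compat. lra. apply pow_lt; lra. Qed.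

Lemma sm_Cst j : Cst * Zd j + Cst / (2 * (INR j + 1)) <= 1.
Proof.
assert (T : forall m, Zd j + / (INR j + 1) - / (INR (j + m) + 1) <= Zd (j + m)).
{ induction m. rewrite Nat.add_0_r. lra.
  rewrite Nat.add_succ_r. unfold Zd in *. rewrite sm_S. rewrite S_INR.
  assert (0 <= INR (j + m)) by apply pos_INR. set (p := INR (j + m)) in *.
  assert (/ (p + 1) ^ 2 >= / (p + 1) - / (p + 1 + 1)).
  { replace (/ (p + 1) - / (p + 1 + 1)) with (/ ((p + 1) * (p + 1 + 1))) by (field; lra).
    apply Rle_ge, Rinv_le_contravar. nra. nra. }
  lra. }
specialize (T (S j)). rewrite plus_INR, S_INR in T.
assert (0 <= INR j) by apply pos_INR.
assert (G := growing_ineq Zd (PI ^ 2 / 6) Z_grow basel_Z (j + S j)).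
assert (E : / (INR j + 1) - / (INR j + (INR j + 1) + 1) = / (2 * (INR j + 1))) by (field; lra).
assert (Cst * (PI ^ 2 / 6) = 1) by (unfold Cst; assert (P := PI_RGT_0); field; lra).
assert (C := Cst_pos).
assert (Zd j + / (2 * (INR j + 1)) <= PI ^ 2 / 6) by lra.
unfold Rdiv. nra. Qed.


Lemma nS_pos i : 0 < INR (S i).
Proof. apply lt_0_INR. lia. Qed.

Lemma nS_ge1 i : 1 <= INR (S i).
Proof. rewrite S_INR. assert (0 <= INR i) by apply pos_INR. lra. Qed.

Lemma ln_kk eps i : ln (kk eps (S i)) = Rpower (INR (S i)) (2 + eps).
Proof. unfold kk. apply ln_exp. Qed.

Lemma rp_ge1 eps i : 0 < eps -> INR (S i) <= Rpower (INR (S i)) (2 + eps).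
Proof. intros He. rewrite <- (Rpower_1 (INR (S i))) at 1 by apply nS_pos.
apply Rle_Rpower. apply nS_ge1. lra. Qed.

Lemma rp_ge2 eps i : 0 < eps -> INR (S i) ^ 2 <= Rpower (INR (S i)) (2 + eps).
Proof. intros He. rewrite <- Rpower_pow by apply nS_pos.
apply Rle_Rpower. apply nS_ge1. simpl INR. lra. Qed.

Lemma kk_gt1 eps i : 0 < eps -> 1 < kk eps (S i).
Proof. intros He. unfold kk. assert (T := rp_ge1 eps i He). assert (T2 := nS_ge1 i).
assert (T3 := exp_ineq1 (Rpower (INR (S i)) (2 + eps)) ltac:(lra)). lra. Qed.

Lemma cv_const_plus u l c : Un_cv u l -> Un_cv (fun n => c + u n) (c + l).
Proof. intros H e He. destruct (H e He) as [N HN]. exists N. intros n Hn.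
unfold Rdist in *. replace (c + u n - (c + l)) with (u n - l) by ring. auto. Qed.

Lemma sum_zero m : sum_f_R0 (fun _ => 0) m = 0.
Proof. induction m; simpl; [ring| rewrite IHm; ring]. Qed.

Lemma patom_sq eps i : 0 < eps -> patom eps (S i) * (2 * kk eps (S i) ^ 2) = Cst / INR (S i) ^ 2.
Proof. intros He. unfold patom. assert (T := kk_gt1 eps i He). assert (T2 := nS_pos i).
field. lra. Qed.

Lemma part1 eps p0 (heps : 0 < eps)
  (hp0 : infinite_sum (fun i => Cst / (kk eps (S i) ^ 2 * INR (S i) ^ 2)) (1 - p0)) : 0 <= p0.
Proof.
assert (1 - p0 <= 1).
{ eapply Rle_cv_lim; [| exact hp0 | exact basel1].
  intros n. apply sum_Rle. intros i _. assert (T := kk_gt1 eps i heps). assert (T2 := nS_pos i).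
  assert (C := Cst_pos).
  replace (Cst / (kk eps (S i) ^ 2 * INR (S i) ^ 2)) with (Cst / INR (S i) ^ 2 * / kk eps (S i) ^ 2) by (field; lra).
  assert (0 < Cst / INR (S i) ^ 2) by (apply Rdiv_lt_0_compat; [lra| apply pow_lt; lra]).
  assert (/ kk eps (S i) ^ 2 <= 1).
  { rewrite <- Rinv_1. apply Rinv_le_contravar. lra. nra. }
  nra. }
lra. Qed.

Lemma integ_id eps p0 (heps : 0 < eps) : Integrable eps p0 (fun x => x).
Proof.
destruct (Rseries_CV_comp (fun i => patom eps (S i) * (Rabs (kk eps (S i)) + Rabs (- kk eps (S i))))
  (fun i => Cst / INR (S i) ^ 2)) as [l Hl].
- intros i. assert (T := kk_gt1 eps i heps). assert (T2 := nS_pos i). assert (C := Cst_pos).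
  rewrite Rabs_Ropp, Rabs_pos_eq by lra.
  replace (patom eps (S i) * (kk eps (S i) + kk eps (S i))) with (Cst / INR (S i) ^ 2 * / kk eps (S i))
   by (unfold patom; field; lra).
  assert (0 < Cst / INR (S i) ^ 2) by (apply Rdiv_lt_0_compat; [lra| apply pow_lt; lra]).
  assert (0 < / kk eps (S i) <= 1).
  { split. apply Rinv_0_lt_compat; lra. rewrite <- Rinv_1. apply Rinv_le_contravar; lra. }
  nra.
- exists 1. exact basel1.
- exists (p0 * Rabs 0 + l). unfold expect_partial. apply cv_const_plus. exact Hl. Qed.

Lemma exp_id eps p0 : Expect eps p0 (fun x => x) = 0.
Proof. unfold Expect. apply Lim_eq. apply cv_ext with (u := fun _ => 0).
- intros n. unfold expect_partial. rewrite (sum_eq _ (fun _ => 0)). rewrite sum_zero. ring.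
  intros; ring.
- intros e He. exists 0%nat. intros. unfold Rdist. rewrite Rminus_diag, Rabs_R0. lra. Qed.

Lemma var_cv eps p0 (heps : 0 < eps) :
  Un_cv (expect_partial eps p0 (fun x => (x - 0) ^ 2)) 1 /\
  Un_cv (expect_partial eps p0 (fun x => Rabs ((x - 0) ^ 2))) 1.
Proof. split.
- apply cv_ext with (u := fun n => 0 + sum_f_R0 (fun i => Cst / INR (S i) ^ 2) n).
  + intros n. unfold expect_partial. f_equal. ring. apply sum_eq. intros i _.
    rewrite <- (patom_sq eps i heps). ring.
  + replace 1 with (0 + 1) by ring. apply cv_const_plus, basel1.
- apply cv_ext with (u := fun n => 0 + sum_f_R0 (fun i => Cst / INR (S i) ^ 2) n).
  + intros n. unfold expect_partial. f_equal. replace ((0 - 0) ^ 2) with 0 by ring. rewrite Rabs_R0; ring.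
    apply sum_eq. intros i _.
    rewrite <- (patom_sq eps i heps). rewrite !Rabs_pos_eq by (apply pow2_ge_0). ring.
  + replace 1 with (0 + 1) by ring. apply cv_const_plus, basel1. Qed.

Lemma part6 eps p0 (heps : 0 < eps) :
  ExpectInfinite eps p0 (fun x => x ^ 2 * sqrt (logplus (Rabs x))).
Proof.
assert (C := Cst_pos).
assert (Low : forall m, Cst * ln (INR m + 2) <= expect_partial eps p0 (fun x => x ^ 2 * sqrt (logplus (Rabs x))) m).
{ intros m. unfold expect_partial. replace (0 ^ 2) with 0 by ring. rewrite Rmult_0_l, Rmult_0_r, Rplus_0_l.
  apply Rle_trans with (Cst * sum_f_R0 (fun i => / INR (S i)) m).
  apply Rmult_le_compat_l. lra. apply H_lower.
  rewrite scal_sum. apply sum_Rle. intros i _.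
  assert (T := kk_gt1 eps i heps). assert (T2 := nS_pos i).
  rewrite Rabs_Ropp, Rabs_pos_eq by lra. unfold logplus. rewrite Rmax_left by lra. rewrite ln_kk.
  replace ((- kk eps (S i)) ^ 2) with (kk eps (S i) ^ 2) by ring.
  replace (patom eps (S i) * (kk eps (S i) ^ 2 * sqrt (Rpower (INR (S i)) (2 + eps)) +
     kk eps (S i) ^ 2 * sqrt (Rpower (INR (S i)) (2 + eps))))
   with (patom eps (S i) * (2 * kk eps (S i) ^ 2) * sqrt (Rpower (INR (S i)) (2 + eps))) by ring.
  rewrite patom_sq by auto.
  assert (INR (S i) <= sqrt (Rpower (INR (S i)) (2 + eps))).
  { rewrite <- (sqrt_pow2 (INR (S i))) at 1 by lra. apply sqrt_le_1_alt. apply rp_ge2; auto. }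
  replace (/ INR (S i) * Cst) with (Cst / INR (S i) ^ 2 * INR (S i)) by (field; lra).
  apply Rmult_le_compat_l. apply Rlt_le, Rdiv_lt_0_compat; [lra| apply pow_lt; lra]. lra. }
intros M. destruct (archimed (exp (M / Cst))) as [Ha _].
assert (0 < exp (M / Cst)) by apply exp_pos.
exists (Z.to_nat (up (exp (M / Cst)))). intros n Hn.
assert (HI : IZR (up (exp (M / Cst))) <= INR n).
{ rewrite INR_IZR_INZ. apply IZR_le. assert (0 < IZR (up (exp (M / Cst)))) by lra. apply lt_0_IZR in H0. lia. }
assert (M / Cst < ln (INR n + 2)).
{ rewrite <- (ln_exp (M / Cst)) at 1. apply ln_increasing. auto. lra. }
specialize (Low n). apply Rmult_lt_compat_l with (r := Cst) in H0; auto.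
replace (Cst * (M / Cst)) with M in H0 by (field; lra). lra. Qed.


Lemma floor_nat x : 0 <= x -> exists j, INR j <= x < INR j + 1.
Proof. intros Hx. destruct (archimed x) as [H1 H2].
assert (0 < IZR (up x)) by lra. apply lt_0_IZR in H.
exists (Z.to_nat (up x - 1)). rewrite INR_IZR_INZ, Z2Nat.id by lia.
rewrite minus_IZR. simpl. lra. Qed.

Lemma indic_true (P : Prop) : P -> indic P = 1.
Proof. intros H. unfold indic. destruct (excluded_middle_informative P); tauto. Qed.
Lemma indic_false (P : Prop) : ~ P -> indic P = 0.
Proof. intros H. unfold indic. destruct (excluded_middle_informative P); tauto. Qed.
Lemma indic_01 (P : Prop) : 0 <= indic P <= 1.
Proof. unfold indic. destruct (excluded_middle_informative P); lra. Qed.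

Lemma sm_mono u a b : (forall i, 0 <= u i) -> (a <= b)%nat -> sm u a <= sm u b.
Proof. intros Hu Hab. replace b with (a + (b - a))%nat by lia. rewrite sm_add.
assert (0 <= sm (fun j => u (a + j)%nat) (b - a)).
{ generalize (b - a)%nat. intros k. induction k. simpl; lra. rewrite sm_S. specialize (Hu (a + k)%nat). lra. }
lra. Qed.

Lemma sm_trunc (t u : nat -> R) j : (forall i, 0 <= t i <= u i) -> (forall i, (j <= i)%nat -> t i = 0) ->
  forall M, sm t M <= sm u j.
Proof. intros Ht Hz M.
assert (forall M, sm t M <= sm u (Nat.min M j)).
{ induction M0. simpl; lra. rewrite sm_S. destruct (le_lt_dec j M0).
  - rewrite Hz by lia. replace (Nat.min (S M0) j) with (Nat.min M0 j) by lia. lra.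
  - replace (Nat.min (S M0) j) with (S M0) by lia. replace (Nat.min M0 j) with M0 in IHM0 by lia.
    rewrite sm_S. specialize (Ht M0). lra. }
eapply Rle_trans. apply H. apply sm_mono. intros i; specialize (Ht i); lra. lia. Qed.

Definition TT (eps : R) (N0 : nat) : R := Rpower (ln (INR N0)) (/ (2 + eps)).

Lemma trunc_bound eps p0 (heps : 0 < eps) N0 k : (2 <= N0)%nat -> (k <= N0)%nat ->
  truncM2 eps p0 k <= 1 - Cst / (2 * (TT eps N0 + 1)).
Proof. intros HN Hk.
assert (C := Cst_pos).
set (t := fun i => Cst / INR (S i) ^ 2 * indic (kk eps (S i) <= INR k)).
assert (Ht : forall i, 0 <= t i <= Cst / INR (S i) ^ 2).
{ intros i. unfold t. assert (T := indic_01 (kk eps (S i) <= INR k)). assert (T2 := nS_pos i).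
  assert (0 < Cst / INR (S i) ^ 2) by (apply Rdiv_lt_0_compat; [lra| apply pow_lt; lra]). nra. }
assert (Ee : forall m, expect_partial eps p0 (fun x => Rabs (x - mu0) ^ 2 * indic (Rabs (x - mu0) <= sigma1 * INR k)) m
   = 0 + sum_f_R0 t m).
{ intros m. unfold expect_partial, mu0, sigma1. f_equal.
  - rewrite Rminus_0_r, Rabs_R0. ring.
  - apply sum_eq. intros i _. unfold t. assert (T := kk_gt1 eps i heps).
    rewrite !Rminus_0_r, Rabs_Ropp, Rabs_pos_eq by lra. rewrite Rmult_1_l.
    rewrite <- (patom_sq eps i heps). ring. }
destruct (Rseries_CV_comp t (fun i => Cst / INR (S i) ^ 2) Ht (exist _ 1 basel1)) as [l Hl].
assert (Etr : truncM2 eps p0 k = l).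
{ unfold truncM2, Expect. apply Lim_eq. apply cv_ext with (u := fun m => 0 + sum_f_R0 t m). exact Ee.
  rewrite <- (Rplus_0_l l). apply cv_const_plus. exact Hl. }
rewrite Etr.
assert (HlnN : 0 < ln (INR N0)).
{ rewrite <- ln_1. apply ln_increasing. lra. apply le_INR in HN. simpl in HN. lra. }
assert (HT0 : 0 <= TT eps N0) by (unfold TT, Rpower; left; apply exp_pos).
destruct (floor_nat (TT eps N0) HT0) as [j [Hj1 Hj2]].
assert (Hz : forall i, (j <= i)%nat -> t i = 0).
{ intros i Hi. unfold t. rewrite indic_false. ring. intros Hc.
  assert (Hle : kk eps (S i) <= INR N0) by (apply le_INR in Hk; lra).
  assert (T := kk_gt1 eps i heps).
  apply ln_le in Hle; [|lra]. rewrite ln_kk in Hle.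
  assert (Rpower (Rpower (INR (S i)) (2 + eps)) (/ (2 + eps)) <= TT eps N0).
  { unfold TT. apply Rle_Rpower_l. left; apply Rinv_0_lt_compat; lra. split; auto.
    unfold Rpower; apply exp_pos. }
  rewrite Rpower_mult, Rinv_r, Rpower_1 in H by (try apply nS_pos; lra).
  apply le_INR in Hi. rewrite S_INR in H. lra. }
assert (Hb : l <= Cst * Zd j).
{ apply Rle_cv_lim with (Un := fun n => sum_f_R0 t n) (Vn := fun _ => Cst * Zd j); auto.
  - intros n. rewrite sm_sum. eapply Rle_trans. apply sm_trunc with (u := fun i => Cst / INR (S i) ^ 2); eauto.
    unfold Zd. rewrite <- sm_scal. right. apply sm_ext. intros. rewrite S_INR. field.
    assert (0 <= INR j0) by apply pos_INR. lra.
  - intros e He. exists 0%nat. intros. unfold Rdist. rewrite Rminus_diag, Rabs_R0. lra. }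
assert (S := sm_Cst j).
assert (Cst / (2 * (TT eps N0 + 1)) <= Cst / (2 * (INR j + 1))).
{ unfold Rdiv. apply Rmult_le_compat_l. lra. apply Rinv_le_contravar.
  assert (0 <= INR j) by apply pos_INR. lra. lra. }
lra. Qed.


Lemma Q_lower eps p0 (heps : 0 < eps) N0 : (2 <= N0)%nat ->
  Cst / (2 * (TT eps N0 + 1)) * ln (INR N0) <= Qn eps p0 N0.
Proof. intros HN. assert (C := Cst_pos).
assert (HT0 : 0 <= TT eps N0) by (unfold TT, Rpower; left; apply exp_pos).
set (c := Cst / (2 * (TT eps N0 + 1))).
assert (Hc : 0 < c) by (unfold c; apply Rdiv_lt_0_compat; lra).
unfold Qn, sigma1.
apply Rle_trans with (c * sum_f_R0 (fun i => / INR (S i)) (pred N0)).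
- apply Rmult_le_compat_l. lra. eapply Rle_trans. 2: apply H_lower.
  apply ln_le. apply lt_0_INR; lia. replace (INR N0) with (INR (S (pred N0))) by (f_equal; lia).
  rewrite S_INR. lra.
- rewrite scal_sum. apply sum_Rle. intros i Hi.
  assert (T := trunc_bound eps p0 heps N0 (S i) HN ltac:(lia)). fold c in T.
  assert (0 < / INR (S i)) by (apply Rinv_0_lt_compat, nS_pos).
  replace (1 ^ 2) with 1 by ring. nra. Qed.

Lemma part7 eps p0 (heps : 0 < eps) : forall M : R, forall N : nat, exists n : nat, (N <= n)%nat /\
      M < Qn eps p0 n / sqrt (ln (INR n)).
Proof. intros M N. assert (C := Cst_pos).
set (d := / (2 + eps)).
assert (Hd0 : 0 < d) by (apply Rinv_0_lt_compat; lra).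
assert (Hd1 : d < / 2) by (apply Rinv_lt_contravar; lra).
set (K := 4 * Rabs M / Cst + 1).
assert (HK : 0 < K) by (unfold K; assert (0 <= Rabs M) by apply Rabs_pos;
   assert (0 <= 4 * Rabs M / Cst) by (apply Rmult_le_pos; [lra| left; apply Rinv_0_lt_compat; lra]); lra).
set (U0 := Rpower K (/ (/ 2 - d))).
destruct (floor_nat (exp (Rmax U0 1))) as [j0 [_ Hj0]]. left; apply exp_pos.
set (N0 := Nat.max N (Nat.max 3 (S j0))).
exists N0. split. unfold N0; lia.
assert (HN0 : (2 <= N0)%nat) by (unfold N0; lia).
assert (HI : exp (Rmax U0 1) < INR N0).
{ assert (INR (S j0) <= INR N0) by (apply le_INR; unfold N0; lia). rewrite S_INR in H. lra. }
set (u := ln (INR N0)).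
assert (Hu : Rmax U0 1 < u).
{ unfold u. rewrite <- (ln_exp (Rmax U0 1)). apply ln_increasing. apply exp_pos. auto. }
assert (Hu1 : 1 < u) by (assert (T := Rmax_r U0 1); lra).
assert (HuU : U0 < u) by (assert (T := Rmax_l U0 1); lra).
assert (HQ := Q_lower eps p0 heps N0 HN0). fold u in HQ.
assert (ETT : TT eps N0 = Rpower u d) by reflexivity.
assert (HT1 : 1 <= Rpower u d).
{ rewrite <- (Rpower_O u) by lra. apply Rle_Rpower; lra. }
assert (Hsq : 0 < sqrt u) by (apply sqrt_lt_R0; lra).
assert (Esq : sqrt u = Rpower u (/ 2)) by (rewrite Rpower_sqrt; auto; lra).
assert (Epw : Rpower u (/ 2) = Rpower u d * Rpower u (/ 2 - d)).
{ rewrite <- Rpower_plus. f_equal. ring. }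
assert (HKlt : K < Rpower u (/ 2 - d)).
{ replace K with (Rpower U0 (/ 2 - d)).
  apply Rlt_Rpower_l. lra. split; auto. unfold U0, Rpower; apply exp_pos.
  unfold U0. rewrite Rpower_mult, Rinv_l, Rpower_1; auto. lra. }
(* Q / sqrt u >= c * sqrt u >= Cst / 4 * Rpower u (/2 - d) > |M| *)
rewrite ETT in HQ.
set (P := Rpower u d) in *. set (W := Rpower u (/ 2 - d)) in *.
assert (Hc : Cst / (2 * (P + 1)) * u / sqrt u = Cst / (2 * (P + 1)) * (P * W)).
{ rewrite <- Epw, <- Esq. rewrite <- (sqrt_sqrt u) at 1 by lra. field. split; lra. }
assert (L1 : Cst / (2 * (P + 1)) * u / sqrt u <= Qn eps p0 N0 / sqrt u).
{ unfold Rdiv at 2 3. apply Rmult_le_compat_r. left; apply Rinv_0_lt_compat; lra. exact HQ. }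
assert (L2 : Cst / 4 * W <= Cst / (2 * (P + 1)) * (P * W)).
{ replace (Cst / (2 * (P + 1)) * (P * W)) with (Cst * W * (P / (2 * (P + 1)))) by (field; lra).
  replace (Cst / 4 * W) with (Cst * W * / 4) by field.
  apply Rmult_le_compat_l. assert (0 < W) by lra. nra.
  apply Rmult_le_reg_r with (4 * (2 * (P + 1))). lra.
  field_simplify; lra. }
assert (L3 : M < Cst / 4 * W).
{ assert (M <= Rabs M) by apply Rle_abs.
  assert (Cst / 4 * K = Rabs M + Cst / 4) by (unfold K; field; lra).
  assert (Cst / 4 * K < Cst / 4 * W) by (apply Rmult_lt_compat_l; lra). lra. }
lra. Qed.

Lemma part8 eps p0 (heps : 0 < eps) : forall (f f' : R -> R) (f2 : R),
      (forall x, derivable_pt_lim f x (f' x)) ->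
      derivable_pt_lim f' mu0 f2 -> f2 <> 0 ->
      ~ Un_cv (fun n => (bn eps p0 (f mu0) f2 n - btn (f mu0) f2 n) / sqrt (ln (INR n))) 0.
Proof. intros f f' f2 _ _ Hf2 Hcv.
assert (Ha : 0 < Rabs f2 / 2) by (assert (0 < Rabs f2) by (apply Rabs_pos_lt; auto); lra).
destruct (Hcv _ Ha) as [N1 HN1].
destruct (part7 eps p0 heps 2 (Nat.max N1 3)) as [n [Hn HQ]].
specialize (HN1 n ltac:(lia)).
assert (H3 : 3 <= INR n) by (apply le_INR in Hn; assert (INR (Nat.max N1 3) >= INR 3) by (apply Rle_ge, le_INR; lia); simpl in H; lra).
assert (Hl1 : 1 <= ln (INR n)).
{ rewrite <- (ln_exp 1). apply ln_le. apply exp_pos. assert (T := exp_le_3). lra. }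
set (u := ln (INR n)) in *.
assert (Hs1 : 1 <= sqrt u) by (rewrite <- sqrt_1; apply sqrt_le_1_alt; lra).
set (H := sum_f_R0 (fun i => / INR (S i)) (pred n)).
assert (HH : H <= 1 + u).
{ unfold H, u. eapply Rle_trans. apply H_upper. right. f_equal. f_equal.
  replace (INR n) with (INR (S (pred n))) by (f_equal; lia). rewrite S_INR. ring. }
assert (E : bn eps p0 (f mu0) f2 n - btn (f mu0) f2 n = f2 / 2 * ((H - u) - Qn eps p0 n)).
{ assert (Es : sum_f_R0 (fun i => / INR (S i) * truncM2 eps p0 (S i)) (pred n) = H - Qn eps p0 n).
  { unfold H, Qn, sigma1. rewrite <- minus_sum. apply sum_eq. intros; ring. }
  unfold bn, btn. rewrite Es. fold u. unfold sigma1. field. }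
rewrite E in HN1. unfold Rdist in HN1. rewrite Rminus_0_r in HN1.
replace (f2 / 2 * (H - u - Qn eps p0 n) / sqrt u) with (f2 / 2 * ((H - u) / sqrt u - Qn eps p0 n / sqrt u)) in HN1
  by (field; lra).
rewrite Rabs_mult in HN1.
assert (Hx : (H - u) / sqrt u <= 1).
{ apply Rmult_le_reg_r with (sqrt u). lra. unfold Rdiv. rewrite Rmult_assoc, Rinv_l by lra. lra. }
assert (1 < Rabs ((H - u) / sqrt u - Qn eps p0 n / sqrt u)).
{ rewrite Rabs_left by lra. lra. }
replace (Rabs (f2 / 2)) with (Rabs f2 / 2) in HN1.
nra. unfold Rdiv. rewrite Rabs_mult, Rabs_inv. rewrite (Rabs_pos_eq 2) by lra. reflexivity. Qed.

Theorem mainTheorem3 (eps p0 : R) (heps : 0 < eps)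
  (hp0 : infinite_sum (fun i => Cst / (kk eps (S i) ^ 2 * INR (S i) ^ 2)) (1 - p0)) :
  (* X is a genuine random variable *)
  0 <= p0 /\
  (* E X = 0 *)
  Integrable eps p0 (fun x => x) /\ Expect eps p0 (fun x => x) = 0 /\
  (* Var X = 1 *)
  Integrable eps p0 (fun x => (x - Expect eps p0 (fun y => y)) ^ 2) /\
  Expect eps p0 (fun x => (x - Expect eps p0 (fun y => y)) ^ 2) = 1 /\
  (* E[X^2 (log^+ |X|)^(1/2)] = infinity *)
  ExpectInfinite eps p0 (fun x => x ^ 2 * sqrt (logplus (Rabs x))) /\
  (* limsup Q_n / sqrt(log n) = infinity *)
  (forall M : R, forall N : nat, exists n : nat, (N <= n)%nat /\
      M < Qn eps p0 n / sqrt (ln (INR n))) /\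
  (* for f with f''(mu) <> 0 : b_n - b~_n is not o(sqrt(log n)) *)
  (forall (f f' : R -> R) (f2 : R),
      (forall x, derivable_pt_lim f x (f' x)) ->
      derivable_pt_lim f' mu0 f2 -> f2 <> 0 ->
      ~ Un_cv (fun n => (bn eps p0 (f mu0) f2 n - btn (f mu0) f2 n) / sqrt (ln (INR n))) 0).
Proof.
split. apply (part1 eps p0 heps hp0).
split. apply integ_id; auto.
split. apply exp_id.
rewrite exp_id.
destruct (var_cv eps p0 heps) as [V1 V2].
split. exists 1. exact V2.
split. apply Lim_eq. exact V1.
split. apply part6; auto.
split. apply part7; auto.
apply part8; auto.
Qed.
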